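(* Let $X$ be a separable Banach space and $(E_n)$ a finite dimensional Markushevich decomposition (FMD) of $X$ with biorthogonal sequence $(F_n)$. The following are equivalent: (1) $(E_n)$ is shrinking, i.e. $\mathrm{span}(F_j:j\in\mathbb N)$ is norm dense in $X^*$; (2) for all $x^*\in X^*$, $\lim_{n\to\infty}\|x^*|_{\mathrm{span}(E_j:j>n)}\|=0$; (3) every bounded sequence $(y_n)$ with $y_n\in\mathrm{span}(E_j:j\in\mathbb N, j\ge n)$ for each $n$ is weakly null.
   Context: A sequence $(E_k)$ of finite dimensional subspaces of $X$ is an FMD of $X$ if, with $F_k=\mathrm{span}(E_j:j\ne k)^\perp=\{f\in X^*: f|_{E_j}=0 \text{ for all } j\neq k\}$ (the biorthogonal sequence), the following hold: (a) $\mathrm{span}(E_k:k\in\mathbb N)$ is dense in $X$; (b) $E_k\cap\overline{\mathrm{span}(E_j:j\ne k)}=\{0\}$ for every $k$; (c) $(F_k)$ is total, i.e. if $x\in X$ and $f(x)=0$ for all $f\in F_k$ and all $k$, then $x=0$. *)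

(* Defs.v *)
From HB Require Import structures.
From mathcomp Require Import all_boot all_order all_algebra.
From mathcomp Require Import all_classical all_reals all_analysis.
Set Implicit Arguments. Unset Strict Implicit. Unset Printing Implicit Defensive.
Import Order.TTheory GRing.Theory Num.Theory.
Import numFieldNormedType.Exports.
Local Open Scope classical_set_scope.
Local Open Scope ring_scope.

Definition linspan (R : pzRingType) (V : lmodType R) (A : set V) : set V :=
  [set x | exists (n : nat) (c : 'I_n -> R) (v : 'I_n -> V),
      (forall i, A (v i)) /\ x = \sum_(i < n) c i *: v i].

Definition subspace (R : pzRingType) (V : lmodType R) (E : set V) : Prop :=
  E 0 /\ forall (a : R) (x y : V), E x -> E y -> E (a *: x + y).

Definition findim_subspace (R : pzRingType) (V : lmodType R) (E : set V) : Prop :=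
  subspace E /\ exists (n : nat) (v : 'I_n -> V), E = linspan [set v i | i in setT].

Definition dual (R : realType) (X : normedModType R) : set (X -> R) :=
  [set f | (forall (a : R) (x y : X), f (a *: x + y) = a * f x + f y)
           /\ continuous f].

Definition restr_norm (R : realType) (X : normedModType R) (f : X -> R)
    (A : set X) : R :=
  sup [set `|f x| | x in [set x | A x /\ `|x| <= 1]].

Definition dual_norm (R : realType) (X : normedModType R) (f : X -> R) : R :=
  restr_norm f setT.

Definition separable (T : topologicalType) : Prop :=
  exists D : set T, countable D /\ dense D.

(* Biorthogonal sequence F_k = span(E_j : j <> k)^perp in X^*. *)
Definition biorth (R : realType) (X : normedModType R) (E : nat -> set X)
    (k : nat) : set (X -> R) :=
  [set f | dual f /\ forall j, j <> k -> forall x, E j x -> f x = 0].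

Definition FMD (R : realType) (X : normedModType R) (E : nat -> set X) : Prop :=
  (forall k, findim_subspace (E k)) /\
  dense (linspan (\bigcup_k E k)) /\
  (forall k, E k `&` closure (linspan (\bigcup_(j in [set j | j <> k]) E j))
                        = [set 0]) /\
  (forall x : X, (forall k f, biorth E k f -> f x = 0) -> x = 0).

Definition shrinking (R : realType) (X : normedModType R) (E : nat -> set X) : Prop :=
  forall f, dual f -> forall eps : R, 0 < eps ->
    exists g, linspan (\bigcup_j biorth E j) g /\ dual_norm (f - g) < eps.

Definition weakly_null (R : realType) (X : normedModType R) (y : nat -> X) : Prop :=
  forall f, dual f -> (fun n => f (y n)) @ \oo --> (0 : R).

(* Main.v *)
Require Import Defs.
From HB Require Import structures.
From mathcomp Require Import all_boot all_order all_algebra.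
From mathcomp Require Import all_classical all_reals all_analysis.
From mathcomp Require Import ring lra.
Import Order.TTheory GRing.Theory Num.Theory.
Import numFieldNormedType.Exports.
Local Open Scope classical_set_scope.
Local Open Scope ring_scope.
Set Implicit Arguments. Unset Strict Implicit. Unset Printing Implicit Defensive.

Section LinAlg.
Context (K : pzRingType) (V : lmodType K).

Definition lin_on (B : set V) (phi : V -> K) :=
  forall a x y, B x -> B y -> phi (a *: x + y) = a * phi x + phi y.

Lemma subspace_sum_mem (B : set V) n (c : 'I_n -> K) (v : 'I_n -> V) :
  Defs.subspace B -> (forall i, B (v i)) -> B (\sum_(i < n) c i *: v i).
Proof.
rewrite /Defs.subspace; move=> [B0 Bc] Bv; elim: n c v Bv => [|n IH] c v Bv; first by rewrite big_ord0.
rewrite big_ord_recr /= addrC; apply: Bc => //.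
exact: (IH (fun i => c (widen_ord (leqnSn n) i)) (fun i => v (widen_ord (leqnSn n) i))).
Qed.

Lemma subspace_linspan (A B : set V) : Defs.subspace B -> A `<=` B -> linspan A `<=` B.
Proof.
move=> sB AB x [n [c [v [Av ->]]]]; apply: subspace_sum_mem => // i; exact: AB.
Qed.

Lemma linspan_subspace (A : set V) : Defs.subspace (linspan A).
Proof.
split.
  by exists 0%N, (fun _ => 0), (fun _ => 0); split => [[]|]; rewrite ?big_ord0.
move=> a x y [n1 [c1 [v1 [Av1 ->]]]] [n2 [c2 [v2 [Av2 ->]]]].
exists (n1 + n2)%N.
exists (fun i => match fintype.split i with inl j => a * c1 j | inr j => c2 j end).
exists (fun i => match fintype.split i with inl j => v1 j | inr j => v2 j end).
split.
  by move=> i; case: (fintype.split i).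
rewrite big_split_ord /= scaler_sumr; congr (_ + _); apply: eq_bigr => i _.
  by rewrite (unsplitK (inl _)) scalerA.
by rewrite (unsplitK (inr _)).
Qed.

Lemma sub_linspan (A : set V) : A `<=` linspan A.
Proof.
move=> x Ax; exists 1%N, (fun _ => 1), (fun _ => x); split => //.
by rewrite big_ord1 scale1r.
Qed.

Lemma linspan_mono (A B : set V) : A `<=` B -> linspan A `<=` linspan B.
Proof.
move=> AB; apply: subspace_linspan; first exact: linspan_subspace.
by move=> x /AB; exact: sub_linspan.
Qed.

Lemma lin_on0 (B : set V) phi : B 0 -> lin_on B phi -> phi 0 = 0.
Proof.
move=> B0 l; have := l (-1) 0 0 B0 B0.
by rewrite scaler0 add0r mulN1r addNr.
Qed.

Lemma lin_on_sub (B B' : set V) phi : B' `<=` B -> lin_on B phi -> lin_on B' phi.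
Proof. by move=> BB l a x y /BB Bx /BB By; exact: l. Qed.

Lemma lin_on_vanish (A B : set V) phi : Defs.subspace B -> A `<=` B -> lin_on B phi ->
  (forall x, A x -> phi x = 0) -> forall x, linspan A x -> phi x = 0.
Proof.
rewrite /Defs.subspace; move=> [B0 Bc] AB l A0 x [n [c [v [Av ->]]]].
elim: n c v Av => [|n IH] c v Av; first by rewrite big_ord0 (@lin_on0 B phi B0 l).
rewrite big_ord_recr /= addrC l.
- by rewrite A0 ?mulr0 ?add0r //; apply: (IH (fun i => c (widen_ord (leqnSn n) i)) (fun i => v (widen_ord (leqnSn n) i))).
- exact: AB.
- apply: (@subspace_sum_mem B n (fun i => c (widen_ord (leqnSn n) i)) (fun i => v (widen_ord (leqnSn n) i))) => //.
  by move=> i; apply: AB.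
Qed.

End LinAlg.

Section SpanN.
Context (K : fieldType) (V : lmodType K).

Fixpoint spanN (v : nat -> V) (m : nat) : set V :=
  match m with
  | 0 => [set 0]
  | m'.+1 => [set y | exists y' a, spanN v m' y' /\ y = y' + a *: v m']
  end.

Lemma spanN0 v m : spanN v m 0.
Proof. by elim: m => [|m IH] //=; exists 0, 0; rewrite scale0r addr0. Qed.

Lemma spanN_subspace v m : Defs.subspace (spanN v m).
Proof.
split; first exact: spanN0.
elim: m => [|m IH] a x y /=.
  by move=> -> ->; rewrite scaler0 addr0.
move=> [x' [a1 [Hx ->]]] [y' [a2 [Hy ->]]].
exists (a *: x' + y'), (a * a1 + a2); split; first exact: IH.
by rewrite scalerDr scalerA scalerDl addrACA.
Qed.

Lemma spanN_S v m y : spanN v m y -> spanN v m.+1 y.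
Proof. by move=> H; exists y, 0; rewrite scale0r addr0. Qed.

Lemma spanN_last v m : spanN v m.+1 (v m).
Proof. by exists 0, 1; rewrite scale1r add0r; split => //; exact: spanN0. Qed.

Lemma spanN_mem v m i : (i < m)%N -> spanN v m (v i).
Proof.
elim: m => [//|m IH]; rewrite ltnS leq_eqVlt => /orP [/eqP ->|/IH]; last exact: spanN_S.
exact: spanN_last.
Qed.

Lemma spanN_le (B : set V) v m : Defs.subspace B -> (forall i, (i < m)%N -> B (v i)) ->
  spanN v m `<=` B.
Proof.
move=> sB; have [B0 Bc] := sB; elim: m => [|m IH] Hv y /=; first by move->.
move=> [y' [a [Hy ->]]]; rewrite addrC; apply: Bc; first by apply: Hv.
by apply: IH => // i Hi; apply: Hv; rewrite ltnS ltnW.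
Qed.

Definition Sclosed (S : set (V -> K)) :=
  S (fun _ => 0) /\ forall a s t, S s -> S t -> S (fun x => a * s x + t x).
Definition Slin (S : set (V -> K)) :=
  forall s, S s -> forall a x y, s (a *: x + y) = a * s x + s y.

Lemma Slin0 S s : Slin S -> S s -> s 0 = 0.
Proof. by move=> l Ss; have := l s Ss (-1) 0 0; rewrite scaler0 add0r mulN1r addNr. Qed.


Lemma spanN_vanish_S S v m s : Slin S -> S s -> (forall z, spanN v m z -> s z = 0) ->
  s (v m) = 0 -> forall z, spanN v m.+1 z -> s z = 0.
Proof.
move=> l Ss H0 Hw z [z' [a [Hz ->]]]; rewrite addrC (l s Ss) Hw H0 //.
by rewrite mulr0 addr0.
Qed.

Lemma dual_step v m : forall S y, Sclosed S -> Slin S ->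
  (forall s, S s -> (forall z, spanN v m z -> s z = 0) -> s y = 0) ->
  exists z, spanN v m z /\ forall s, S s -> s y = s z.
Proof.
elim: m => [|m IH] S y [S0 Sc] l Hy.
  by exists 0; split => // s Ss; rewrite (Slin0 l Ss) Hy // => z /= ->; rewrite (Slin0 l Ss).
set w := v m.
have [[s0 [Ss0 [H0 Hw]]]|nocase] := pselect (exists s0, S s0 /\
    (forall z, spanN v m z -> s0 z = 0) /\ s0 w != 0).
- pose S2 := [set s | S s /\ s w = 0].
  have [z2 [Hz2 Hs2]] : exists z, spanN v m z /\ forall s, S2 s -> s y = s z.
    apply: IH.
    + rewrite /Sclosed; split; first by split.
      move=> a s t [Ss Sw] [St Tw]; split; first exact: Sc.
      by rewrite Sw Tw mulr0 addr0.
    + by move=> s [Ss _]; exact: l.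
    + move=> s [Ss Sw] Hs; apply: Hy => //.
      exact: (spanN_vanish_S l Ss Hs Sw).
  exists (z2 + (s0 y / s0 w) *: w); split.
    by exists z2, (s0 y / s0 w).
  move=> s Ss.
  pose c := s w / s0 w.
  have S2t : S2 (fun x => (- c) * s0 x + s x).
    split; first exact: Sc.
    by rewrite /c mulNr -mulrA mulVf // mulr1 addNr.
  have := Hs2 _ S2t; rewrite (H0 _ Hz2) mulr0 add0r => Heq.
  have -> : s y = s z2 + c * s0 y by rewrite -Heq; ring.
  by rewrite [z2 + _]addrC (l s Ss) /c; field.
- have [z' [Hz' Hs]] : exists z, spanN v m z /\ forall s, S s -> s y = s z.
    apply: IH; [by split | exact: l | ].
    move=> s Ss Hs; apply: Hy => //; apply: (spanN_vanish_S l Ss Hs).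
    apply: contrapT => Hw; apply: nocase; exists s; split => //; split => //.
    by apply/eqP.
  by exists z'; split => //; exact: spanN_S.
Qed.


Lemma restr_step v m S (phi : V -> K) : Sclosed S -> Slin S -> lin_on (spanN v m) phi ->
  (forall y, spanN v m y -> (forall s, S s -> s y = 0) -> phi y = 0) ->
  exists s, S s /\ forall y, spanN v m y -> s y = phi y.
Proof.
move=> [S0 Sc] l; elim: m => [|m IH] lphi Hphi.
  exists (fun _ => 0); split => // y /= ->.
  by have := lphi (-1) 0 0 erefl erefl; rewrite scaler0 add0r mulN1r addNr.
have [s1 [Ss1 H1]] : exists s, S s /\ forall y, spanN v m y -> s y = phi y.
  apply: IH.
  - by move=> a x y Hx Hy; apply: lphi; exact: spanN_S.
  - by move=> y Hy Hs; apply: Hphi => //; exact: spanN_S.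
set w := v m.
have Hw : spanN v m.+1 w := spanN_last v m.
have [[s0 [Ss0 [H0 Hw0]]]|nocase] := pselect (exists s0, S s0 /\
    (forall z, spanN v m z -> s0 z = 0) /\ s0 w != 0).
- exists (fun x => ((phi w - s1 w) / s0 w) * s0 x + s1 x); split; first exact: Sc.
  move=> y [y' [a [Hy' ->]]].
  rewrite /= [y' + _]addrC (l s0 Ss0) (l s1 Ss1) (H0 _ Hy') (H1 _ Hy') lphi //; last exact: spanN_S.
  by field.
- have [x' [Hx' Hs]] : exists z, spanN v m z /\ forall s, S s -> s w = s z.
    apply: dual_step; [by split | exact: l | ].
    move=> s Ss Hs; apply: contrapT => Hw'; apply: nocase; exists s.
    by split => //; split => //; apply/eqP.
  have Hx'S := spanN_S Hx'.
  have [_ Hc] := spanN_subspace v m.+1.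
  have phiw : phi w = phi x'.
    have H0' : phi ((-1) *: x' + w) = 0.
      apply: Hphi; first exact: Hc.
      by move=> s Ss; rewrite (l s Ss) -Hs // mulN1r addNr.
    by move: H0'; rewrite lphi // mulN1r addrC => /eqP; rewrite subr_eq0 => /eqP.
  exists s1; split => // y [y' [a [Hy' ->]]].
  rewrite [y' + _]addrC (l s1 Ss1) Hs // H1 // H1 // -phiw lphi //; exact: spanN_S.
Qed.

End SpanN.

Section HB.
Context (R : realType) (X : normedModType R).


Definition Uplus (U : set X) (x : X) := [set y | exists u a, U u /\ y = u + a *: x].

Lemma hb_step (U : set X) (h : X -> R) (C : R) (x : X) : 0 <= C ->
  Defs.subspace U -> lin_on U h -> (forall u, U u -> h u <= C * `|u|) ->
  exists h', lin_on (Uplus U x) h' /\ (forall u, U u -> h' u = h u) /\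
    (forall y, Uplus U x y -> h' y <= C * `|y|).
Proof.
move=> C0 [U0 Uc] lh hC.
have h0 : h 0 = 0 by have := lh (-1) 0 0 U0 U0; rewrite scaler0 add0r mulN1r addNr.
have hZ : forall a u, U u -> h (a *: u) = a * h u.
  by move=> a u Uu; have := lh a u 0 Uu U0; rewrite !addr0 h0 addr0.
have [Ux|nUx] := pselect (U x).
  exists h; split; last split => //.
  - move=> a y z [u1 [a1 [U1 ->]]] [u2 [a2 [U2 ->]]]; apply: lh.
    + by rewrite addrC; exact: Uc.
    + by rewrite addrC; exact: Uc.
  - by move=> y [u [a [Uu ->]]]; apply: hC; rewrite addrC; exact: Uc.
have key : forall u u', U u -> U u' -> h u - C * `|u - x| <= C * `|u' + x| - h u'.
  move=> u u' Uu Uu'.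
  have e : h (u + u') = h u + h u'.
    by have := lh 1 u u' Uu Uu'; rewrite scale1r mul1r.
  have := hC _ (Uc 1 u u' Uu Uu'); rewrite scale1r e.
  have : `|u + u'| <= `|u - x| + `|u' + x|.
    have -> : u + u' = (u - x) + (u' + x) by rewrite addrACA addNr addr0.
    exact: ler_normD.
  move=> /(ler_wpM2l C0) H1 H2.
  lra.
pose A := [set h u - C * `|u - x| | u in U].
have A0 : A !=set0 by exists (h 0 - C * `|0 - x|); exists 0.
have Aub : ubound A (C * `|0 + x| - h 0) by move=> _ [u Uu <-]; apply: key.
pose c := sup A.
have c_ge : forall u, U u -> h u - C * `|u - x| <= c.
  move=> u Uu; apply: ub_le_sup; first by exists (C * `|0 + x| - h 0).
  by exists u.
have c_le : forall u, U u -> c <= C * `|u + x| - h u.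
  by move=> u Uu; apply: ge_sup => // _ [u' Uu' <-]; apply: key.
have [rep Hrep] : {rep : X -> X * R & forall y, Uplus U x y ->
    U (rep y).1 /\ y = (rep y).1 + (rep y).2 *: x}.
  apply: (@choice X (X * R)%type (fun y p => Uplus U x y -> U p.1 /\ y = p.1 + p.2 *: x)) => y; have [[u [a [Uu ->]]]|n] := pselect (Uplus U x y).
    by exists (u, a).
  by exists (0, 0).
have uniq : forall u a, U u -> rep (u + a *: x) = (u, a).
  move=> u a Uu.
  have [U1 e] := Hrep (u + a *: x) (ex_intro _ u (ex_intro _ a (conj Uu erefl))).
  move: U1 e; case: (rep _) => [u1 a1] /= U1 e.
  have [ea|na] := eqVneq a1 a.
    by rewrite ea in e *; move/addIr: e => ->.
  exfalso; apply: nUx.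
  have -> : x = (a - a1)^-1 *: (u1 - u).
    apply: (@scalerI _ _ (a - a1)); first by rewrite subr_eq0 eq_sym.
    rewrite scalerA mulfV ?subr_eq0 1?eq_sym // scale1r scalerBl.
    have -> : u1 = u + a *: x - a1 *: x by rewrite e addrK.
    by rewrite addrAC [u + _]addrC addrK.
  rewrite -[_ *: _]addr0; apply: (Uc) => //.
  by rewrite -scaleN1r addrC; apply: (Uc).
pose h' := fun y => h (rep y).1 + (rep y).2 * c.
have h'E : forall u a, U u -> h' (u + a *: x) = h u + a * c.
  by move=> u a Uu; rewrite /h' uniq.
exists h'; split; [|split].
- move=> a y z [u1 [a1 [U1 ->]]] [u2 [a2 [U2 ->]]].
  have -> : a *: (u1 + a1 *: x) + (u2 + a2 *: x) = (a *: u1 + u2) + (a * a1 + a2) *: x.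
    by rewrite scalerDr scalerA scalerDl addrACA.
  rewrite !h'E //; last exact: Uc.
  rewrite lh //; ring.
- by move=> u Uu; have := h'E u 0 Uu; rewrite scale0r addr0 mul0r addr0.
- move=> y [u [a [Uu ->]]]; rewrite h'E //.
  have [->|a0] := eqVneq a 0.
    by rewrite scale0r addr0 mul0r addr0; exact: hC.
  pose u0 := a^-1 *: u.
  have Uu0 : U u0 by rewrite /u0 -[_ *: u]addr0; exact: Uc.
  have Uu0N : U (- u0) by rewrite -scaleN1r -[_ *: u0]addr0; exact: Uc.
  have eu : u = a *: u0 by rewrite /u0 scalerA mulfV // scale1r.
  have hu : h u = a * h u0 by rewrite eu hZ.
  have ny : `|u + a *: x| = `|a| * `|u0 + x| by rewrite eu -scalerDr normrZ.
  rewrite hu ny.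
  have [an|ap|ae] := ltgtP a 0; last by rewrite ae eqxx in a0.
  + have := c_ge _ Uu0N.
    have hN : h (- u0) = - h u0 by rewrite -scaleN1r hZ // mulN1r.
    have nN : `|- u0 - x| = `|u0 + x| by rewrite -opprD normrN.
    rewrite hN nN (ltr0_norm an) => H.
    nra.
  + have := c_le _ Uu0; rewrite (gtr0_norm ap) => H.
    nra.
Qed.
End HB.

Section Dual.
Context (R : realType) (X : normedModType R).

Lemma dual0 (f : X -> R) : dual f -> f 0 = 0.
Proof. by move=> [l _]; have := l (-1) 0 0; rewrite scaler0 add0r mulN1r addNr. Qed.

Lemma dualZ (f : X -> R) a x : dual f -> f (a *: x) = a * f x.
Proof. by move=> df; have [l _] := df; rewrite -[a *: x]addr0 l (dual0 df) addr0. Qed.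

Lemma dual_comb (f g : X -> R) a : dual f -> dual g -> dual (fun x => a * f x + g x).
Proof.
move=> [lf cf] [lg cg]; split.
  by move=> b x y; rewrite lf lg; ring.
move=> x.
have h1 : {for x, continuous (fun y => a * f y)}.
  exact: (@continuousM _ _ (fun=> a) f x (@cst_continuous _ _ a x) (cf x)).
exact: (continuousD h1 (cg x)).
Qed.

Lemma dual_cst0 : dual (fun _ : X => 0 : R).
Proof. by split; [move=> *; ring | move=> x; exact: cst_continuous]. Qed.

Lemma dual_subspace : Defs.subspace (@dual R X).
Proof.
split; first exact: dual_cst0.
move=> a f g df dg; exact: dual_comb.
Qed.

Lemma dual_bounded (f : X -> R) : dual f -> exists K, 0 < K /\ forall x, `|f x| <= K * `|x|.
Proof.
move=> df; have [l cf] := df.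
have := cf 0 => /cvgrPdist_lt /(_ 1 ltr01) /nbhs_ballP [e e0 He].
exists (2 / e); split; first by rewrite divr_gt0.
move=> x; have [->|x0] := eqVneq x 0; first by rewrite (dual0 df) !normr0 mulr0.
have nx : 0 < `|x| by rewrite normr_gt0.
pose t := e / 2 / `|x|.
have t0 : 0 < t by rewrite /t !divr_gt0.
have : ball (0 : X) e (t *: x).
  rewrite -ball_normE /= sub0r normrN normrZ (gtr0_norm t0) /t.
  rewrite divfK ?gt_eqF //. have e0' : 0 < e by []. lra.
move=> /He /=; rewrite (dual0 df) sub0r normrN (dualZ _ _ df) normrM (gtr0_norm t0) /t => H.
have : e / 2 / `|x| * `|f x| * (2 / e * `|x|) < 2 / e * `|x|.
  by rewrite -[X in _ < X]mul1r ltr_pM2r // mulr_gt0 // divr_gt0.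
have -> : e / 2 / `|x| * `|f x| * (2 / e * `|x|) = `|f x|.
  by field; rewrite ?gt_eqF.
exact: ltW.
Qed.

Lemma restr_ub (f : X -> R) (A : set X) x : dual f -> A x -> `|x| <= 1 ->
  `|f x| <= restr_norm f A.
Proof.
move=> df Ax x1; have [K [K0 HK]] := dual_bounded df.
apply: ub_le_sup; last by exists x.
exists K => _ [y [_ y1] <-]; apply: (le_trans (HK y)).
by rewrite -[X in _ <= X]mulr1 ler_wpM2l // ltW.
Qed.

Lemma restr_ge0 (f : X -> R) (A : set X) : dual f -> A 0 -> 0 <= restr_norm f A.
Proof.
move=> df A0; apply: le_trans (restr_ub df A0 _); last by rewrite normr0.
by rewrite normr_ge0.
Qed.

Lemma restr_bound (f : X -> R) (A : set X) x : dual f ->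
  (forall a y, A y -> A (a *: y)) -> A x -> `|f x| <= restr_norm f A * `|x|.
Proof.
move=> df AZ Ax.
have [->|x0] := eqVneq x 0; first by rewrite (dual0 df) !normr0 mulr0.
have nx : 0 < `|x| by rewrite normr_gt0.
have := restr_ub df (AZ (`|x|^-1) _ Ax) _.
rewrite normrZ normrV ?unitfE ?gt_eqF // normr_id mulVf ?gt_eqF //.
rewrite (dualZ _ _ df) normrM normrV ?unitfE ?gt_eqF // normr_id => /(_ (lexx _)) H.
by rewrite -ler_pdivrMr // mulrC.
Qed.

Lemma dual_norm_le (f : X -> R) C : (forall x, `|x| <= 1 -> `|f x| <= C) -> dual_norm f <= C.
Proof.
move=> H; apply: ge_sup; first by exists `|f 0|, 0; split => //; rewrite normr0.
by move=> _ [y [_ y1] <-]; exact: H.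
Qed.

End Dual.

Section Ext.
Context (R : realType) (X : normedModType R).

Definition Usum (U W : set X) := [set y | exists u w, U u /\ W w /\ y = u + w].

Lemma Usum_subspace U W : Defs.subspace U -> Defs.subspace W -> Defs.subspace (Usum U W).
Proof.
move=> [U0 Uc] [W0 Wc]; split; first by exists 0, 0; rewrite addr0.
move=> a _ _ [u1 [w1 [U1 [W1 ->]]]] [u2 [w2 [U2 [W2 ->]]]].
exists (a *: u1 + u2), (a *: w1 + w2); split; first exact: Uc.
by split; [exact: Wc | rewrite scalerDr addrACA].
Qed.

Lemma Usum_l U W : W 0 -> U `<=` Usum U W.
Proof. by move=> W0 u Uu; exists u, 0; rewrite addr0. Qed.

Lemma Usum_r U W : U 0 -> W `<=` Usum U W.
Proof. by move=> U0 w Ww; exists 0, w; rewrite add0r. Qed.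

Lemma Usum_mono U U' W W' : U `<=` U' -> W `<=` W' -> Usum U W `<=` Usum U' W'.
Proof. by move=> UU WW _ [u [w [Uu [Ww ->]]]]; exists u, w; split; [exact: UU|split; [exact: WW|]]. Qed.

Lemma hb_span (U : set X) (h : X -> R) (C : R) (v : nat -> X) m : 0 <= C ->
  Defs.subspace U -> lin_on U h -> (forall u, U u -> h u <= C * `|u|) ->
  exists h', lin_on (Usum U (spanN v m)) h' /\ (forall u, U u -> h' u = h u) /\
    (forall y, Usum U (spanN v m) y -> h' y <= C * `|y|).
Proof.
move=> C0 sU lh hC; elim: m => [|m [h1 [l1 [a1 b1]]]].
  exists h; split; last split => //.
    by move=> a _ _ [u1 [w1 [U1 [-> ->]]]] [u2 [w2 [U2 [-> ->]]]]; rewrite !addr0; exact: lh.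
  by move=> _ [u [w [Uu [-> ->]]]]; rewrite addr0; exact: hC.
have sU1 : Defs.subspace (Usum U (spanN v m)) := Usum_subspace sU (spanN_subspace v m).
have [h2 [l2 [a2 b2]]] := hb_step (v m) C0 sU1 l1 b1.
have inc : Usum U (spanN v m.+1) `<=` Uplus (Usum U (spanN v m)) (v m).
  move=> _ [u [w [Uu [[w' [a [Hw' ->]]] ->]]]].
  exists (u + w'), a; split; first by exists u, w'.
  by rewrite addrA.
exists h2; split; first exact: lin_on_sub inc l2.
split; last by move=> y /inc; exact: b2.
move=> u Uu; rewrite a2 ?a1 //; apply: Usum_l => //; exact: spanN0.
Qed.

Lemma findim_spanN (F : set X) : findim_subspace F ->
  exists v m, F `<=` spanN v m /\ spanN v m `<=` F.
Proof.
move=> [sF [n [v HF]]].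
pose v' := fun i : nat => match insub i with Some j => v j | None => 0 end.
have v'E : forall j : 'I_n, v' j = v j by move=> j; rewrite /v' valK.
exists v', n; split.
  rewrite HF; apply: subspace_linspan; first exact: spanN_subspace.
  move=> _ [j _ <-]; rewrite -v'E; apply: spanN_mem; exact: ltn_ord.
apply: spanN_le => // i Hi.
have -> : v' i = v (Ordinal Hi) by rewrite -v'E.
by rewrite HF; apply: sub_linspan; exists (Ordinal Hi).
Qed.

End Ext.

Section Main.
Context (R : realType) (X : normedModType R).
Implicit Types (E : nat -> set X).

Fixpoint Tset (Z : set X) E k := match k with 0 => Z | k'.+1 => Usum (Tset Z E k') (E k') end.

Lemma Tset_subspace Z E k : Defs.subspace Z -> (forall j, Defs.subspace (E j)) ->
  Defs.subspace (Tset Z E k).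
Proof. by move=> sZ sE; elim: k => //= k IH; exact: Usum_subspace. Qed.

Lemma Tset_mono Z E k k' : (forall j, E j 0) -> (k <= k')%N -> Tset Z E k `<=` Tset Z E k'.
Proof.
move=> E0; elim: k' => [|k' IH]; first by rewrite leqn0 => /eqP ->.
rewrite leq_eqVlt => /orP [/eqP ->//|]; rewrite ltnS => /IH H x /H Hx.
by apply: Usum_l.
Qed.

Lemma Tset_Z Z E k : (forall j, E j 0) -> Z `<=` Tset Z E k.
Proof. by move=> E0; exact: (@Tset_mono Z E 0 k E0 (leq0n k)). Qed.

Lemma Tset_E Z E j : Defs.subspace Z -> (forall j, Defs.subspace (E j)) -> E j `<=` Tset Z E j.+1.
Proof. by move=> sZ sE /=; apply: Usum_r; have [] := Tset_subspace j sZ sE. Qed.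

Lemma dual_sum N (g : nat -> X -> R) : (forall i, (i < N)%N -> dual (g i)) ->
  dual (fun x => \sum_(i < N) g i x).
Proof.
elim: N => [|N IH] Hg.
  have -> : (fun x => \sum_(i < 0) g i x) = (fun _ => 0) by apply: funext => x; rewrite big_ord0.
  exact: dual_cst0.
have -> : (fun x => \sum_(i < N.+1) g i x) = (fun x => 1 * g N x + \sum_(i < N) g i x).
  by apply: funext => x; rewrite big_ord_recr /= mul1r addrC.
apply: dual_comb; first exact: Hg.
by apply: IH => i Hi; apply: Hg; rewrite ltnS ltnW.
Qed.

Lemma biorth_Sclosed E k : Sclosed (biorth E k).
Proof.
split; first by split; [exact: dual_cst0|].
move=> a s t [ds Hs] [dt Ht]; split; first exact: dual_comb.
by move=> j jk x Ejx; rewrite (Hs j) // (Ht j) // mulr0 addr0.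
Qed.

Lemma biorth_Slin E k : Slin (biorth E k).
Proof. by move=> s [[l _] _]. Qed.

Lemma biorth_extend E k (phi : X -> R) : FMD E -> lin_on (E k) phi ->
  exists g, biorth E k g /\ forall x, E k x -> g x = phi x.
Proof.
move=> [sE [_ [_ Hc]]] lphi.
have [v [m [s1 s2]]] := findim_spanN (sE k).
have [E0 _] := (sE k).1.
have [s [Ss Hs]] : exists s, biorth E k s /\ forall y, spanN v m y -> s y = phi y.
  apply: restr_step; [exact: biorth_Sclosed|exact: biorth_Slin| |].
    exact: lin_on_sub s2 lphi.
  move=> y /s2 Eky Hy.
  suff -> : y = 0 by exact: (lin_on0 E0 lphi).
  apply: Hc => k' f bf.
  have [ek|nk] := eqVneq k' k; first by rewrite ek in bf; exact: Hy.
  by have [_ Hf] := bf; apply: (Hf k) => //; apply/eqP; rewrite eq_sym.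
by exists s; split => // x /s1; exact: Hs.
Qed.

End Main.

Section Two.
Context (R : realType) (X : normedModType R).
Implicit Types (E : nat -> set X).

Definition Zt E n := linspan (\bigcup_(j in [set j | (n < j)%N]) E j).

Lemma two_one E : FMD E ->
  (forall f, dual f -> (fun n => restr_norm f (Zt E n)) @ \oo --> (0 : R)) ->
  shrinking E.
Proof.
move=> HF H2 f df eps eps0.
have HF' := HF; move: HF' => [sE [Hdense [_ _]]].
have E0 : forall j, E j 0 by move=> j; have [[]] := sE j.
have sEj : forall j, Defs.subspace (E j) by move=> j; have [] := sE j.
have [N _ HN] := (cvgrPdist_lt _ _).1 (H2 f df) eps eps0.
pose n := N.
have Hn := HN n (leqnn N).
pose C := restr_norm f (Zt E n).
have sZ : Defs.subspace (Zt E n) := linspan_subspace _.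
have C0 : 0 <= C by apply: restr_ge0 => //; have [] := sZ.
have Ceps : C < eps by move: Hn; rewrite sub0r normrN ger0_norm.
have fC : forall u, Zt E n u -> `|f u| <= C * `|u|.
  move=> u Zu; apply: restr_bound => // a y Zy.
  rewrite -[_ *: y]addr0; apply: sZ.2 => //; exact: sZ.1.
have lf : forall B, lin_on B f by move=> B a x y _ _; exact: df.1.
pose T := Tset (Zt E n) E.
have sT : forall k, Defs.subspace (T k) by move=> k; exact: Tset_subspace.
have ext : forall k, exists h, lin_on (T k) h /\ (forall u, Zt E n u -> h u = f u) /\
    (forall y, T k y -> h y <= C * `|y|).
  elim => [|k [h [lh [ah bh]]]].
    exists f; split => //; split => // u Zu.
    exact: le_trans (ler_norm _) (fC _ Zu).
  have [v [m [s1 _]]] := findim_spanN (sE k).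
  have [h' [lh' [ah' bh']]] := hb_span v m C0 (sT k) lh bh.
  have inc : T k.+1 `<=` Usum (T k) (spanN v m) by apply: Usum_mono.
  exists h'; split; first exact: lin_on_sub inc lh'.
  split; last by move=> y /inc; exact: bh'.
  by move=> u Zu; rewrite ah' ?ah //; exact: Tset_Z.
have [h [lh [ah bh]]] := ext n.+1.
pose W := linspan (\bigcup_k E k).
have WT : W `<=` T n.+1.
  apply: subspace_linspan => // w [j _ Ejw].
  have [jn|nj] := leqP j n.
    apply: (Tset_mono (Z:=Zt E n) (E:=E) (k:=j.+1) (k':=n.+1) E0 jn); exact: Tset_E.
  by apply: Tset_Z => //; apply: sub_linspan; exists j.
have [g Hg] : {g : nat -> X -> R & forall k, (k <= n)%N ->
    biorth E k (g k) /\ forall x, E k x -> g k x = f x - h x}.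
  apply: (@choice nat (X -> R) (fun k g => (k <= n)%N ->
    biorth E k g /\ forall x, E k x -> g x = f x - h x)) => k.
  have [kn|nk] := leqP k n; last by exists (fun _ => 0).
  have [g' [bg' Hg']] : exists g, biorth E k g /\ forall x, E k x -> g x = f x - h x.
    apply: biorth_extend => // a x y Ex Ey.
    have Tx : T n.+1 x by apply: (Tset_mono (k:=k.+1) (k':=n.+1) E0 kn); exact: Tset_E.
    have Ty : T n.+1 y by apply: (Tset_mono (k:=k.+1) (k':=n.+1) E0 kn); exact: Tset_E.
    rewrite df.1 lh //; ring.
  by exists g'.
pose G := \sum_(i < n.+1) g i.
exists G; split.
  exists n.+1, (fun _ => 1), (fun i => g i); split.
    by move=> i; exists i => //; have [] := Hg i (ltn_ord i).
  by rewrite /G; apply: eq_bigr => i _; rewrite scale1r.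
pose Phi := fun x => f x - \sum_(i < n.+1) g i x.
have PhiE : forall x, (f - G) x = Phi x by move=> x; rewrite /Phi /G /= fct_sumE.
have dPhi : dual Phi.
  have -> : Phi = (fun x => (-1) * (\sum_(i < n.+1) g i x) + f x).
    by apply: funext => x; rewrite /Phi mulN1r addrC.
  apply: dual_comb => //; apply: dual_sum => i Hi.
  by have [[]] := Hg i (Hi : (i <= n)%N).
have PhiW : forall w, W w -> Phi w = h w.
  move=> w Ww; apply/eqP; rewrite -subr_eq0; apply/eqP.
  apply: (@lin_on_vanish _ _ (\bigcup_k E k) (T n.+1) (fun x => Phi x - h x)) => //.
  - by move=> x [j _ Ejx]; apply: WT; apply: sub_linspan; exists j.
  - move=> a x y Tx Ty; rewrite dPhi.1 lh //; ring.
  - move=> x [j _ Ejx]; rewrite /Phi.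
    have [jn|nj] := leqP j n.
      rewrite (bigD1 (Ordinal (jn : (j < n.+1)%N))) //= big1.
        by rewrite (Hg j jn).2 // addr0; ring.
      move=> i ne; have [[_ Hi] _] := Hg i (ltn_ord i : (i <= n)%N).
      apply: (Hi j) => //; apply/eqP; apply: contra ne => /eqP ij.
      by apply/eqP; apply: val_inj; rewrite /= ij.
    rewrite big1 ?subr0 ?ah ?subrr //; first by rewrite /Zt; apply: sub_linspan; exists j.
    move=> i _; have [[_ Hi] _] := Hg i (ltn_ord i : (i <= n)%N).
    apply: (Hi j) => //; apply/eqP; rewrite neq_ltn; apply/orP; right.
    by apply: leq_ltn_trans nj; exact: (ltn_ord i).
have PhiWb : forall w, W w -> `|Phi w| <= C * `|w|.
  move=> w Ww; rewrite PhiW //.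
  have Tw := WT _ Ww.
  have TNw : T n.+1 (- w).
    by rewrite -scaleN1r -[_ *: w]addr0; apply: (sT n.+1).2 => //; exact: (sT n.+1).1.
  have hN : h (- w) = - h w.
    rewrite -scaleN1r -[_ *: w]addr0 lh //; last exact: (sT n.+1).1.
    by rewrite (lin_on0 (sT n.+1).1 lh) addr0 mulN1r.
  have := bh _ TNw; rewrite hN normrN => Hb1.
  have := bh _ Tw => Hb2.
  by rewrite ler_norml; apply/andP; split; lra.
apply: le_lt_trans Ceps.
apply: dual_norm_le => x x1; rewrite PhiE.
apply/ler_addgt0Pr => e e0.
pose d := e / (C + 2).
have d0 : 0 < d by rewrite divr_gt0 //; lra.
have [r r0 Hr] := (nbhs_ballP _ _).1 ((cvgrPdist_lt _ _).1 (dPhi.2 x) d d0).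
pose r' := Num.min r d.
have r'0 : 0 < r' by rewrite lt_min r0 d0.
have [w [Bw Ww]] : (ball x r' `&` W) !=set0.
  apply: Hdense; last exact: ball_open.
  by exists x; exact: ballxx.
have [Bwr Bwd] : ball x r w /\ `|x - w| < d.
  by move: Bw; rewrite -ball_normE /= lt_min => /andP [].
have Hc1 := Hr _ Bwr; rewrite /= in Hc1.
have Hc2 := PhiWb _ Ww.
have Hc3 : `|w| <= `|x| + `|x - w|.
  rewrite -{1}(subrK x w); apply: le_trans (ler_normD _ _) _.
  by rewrite distrC addrC.
have Ht : `|Phi x| <= `|Phi x - Phi w| + `|Phi w|.
  by rewrite -{1}(subrK (Phi w) (Phi x)); exact: ler_normD.
have de : d * (C + 2) = e by rewrite /d divfK // gt_eqF //; lra.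
have m1 := ler_wpM2l C0 Hc3.
have m2 := ler_wpM2l C0 x1.
have m3 := ler_wpM2l C0 (ltW Bwd).
nra.
Qed.
End Two.

Section Rest.
Context (R : realType) (X : normedModType R).
Implicit Types (E : nat -> set X).

Lemma dual_sub (f g : X -> R) : dual f -> dual g -> dual (f - g).
Proof.
move=> df dg; have -> : f - g = (fun x => (-1) * g x + f x).
  by apply: funext => x; rewrite /= mulN1r addrC.
exact: dual_comb.
Qed.

Lemma restr_mono (f : X -> R) (A B : set X) : dual f -> A 0 -> A `<=` B ->
  restr_norm f A <= restr_norm f B.
Proof.
move=> df A0 AB; apply: ge_sup; first by exists `|f 0|, 0; split => //; rewrite normr0.
by move=> _ [z [Az z1] <-]; apply: restr_ub => //; exact: AB.
Qed.

Lemma Zt_scale E n a y : Zt E n y -> Zt E n (a *: y).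
Proof.
move=> Zy; rewrite -[_ *: y]addr0; have [Z0 Zc] := linspan_subspace (\bigcup_(j in [set j | (n < j)%N]) E j).
exact: Zc.
Qed.

Lemma Zt0 E n : Zt E n 0.
Proof. exact: (linspan_subspace _).1. Qed.

Lemma one_two E : shrinking E ->
  forall f, dual f -> (fun n => restr_norm f (Zt E n)) @ \oo --> (0 : R).
Proof.
move=> Hs f df; apply/cvgrPdist_lt => eps eps0.
have [g [Lg Hfg]] := Hs f df eps eps0.
have dg : dual g.
  apply: subspace_linspan Lg; first exact: dual_subspace.
  by move=> h [j _ [dh _]].
have dfg := dual_sub df dg.
move: Lg => [N [c [v [Hv Hg]]]].
have [kf Hkf] : {kf : 'I_N -> nat & forall i, biorth E (kf i) (v i)}.
  apply: (@choice _ _ (fun i k => biorth E k (v i))) => i.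
  by have [j _ Hj] := Hv i; exists j.
exists (\max_(i < N) kf i)%N => // n /= Kn.
rewrite sub0r normrN ger0_norm; last exact: restr_ge0 (Zt0 _ _).
apply: le_lt_trans Hfg.
apply: ge_sup; first by exists `|f 0|, 0; split; [exact: Zt0|rewrite normr0].
move=> _ [z [Zz z1] <-].
have gz : g z = 0.
  rewrite Hg fct_sumE big1 // => i _ /=.
  have [[lv _] Hv0] := Hkf i.
  change (c i * v i z = 0).
  have -> : v i z = 0.
    apply: (@lin_on_vanish _ _ (\bigcup_(j in [set j | (n < j)%N]) E j) setT (v i) _ _ _ _ z Zz).
    - by split => //.
    - by split.
    - by [].
    - move=> x [j /= nj Ejx]; apply: (Hv0 j) => // ej.
      have : (kf i <= n)%N.
        apply: leq_trans Kn; first exact: leq_bigmax.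
      by rewrite -ej leqNgt nj.
  by rewrite mulr0.
have -> : `|f z| = `|(f - g) z| by change (`|f z| = `|f z - g z|); rewrite gz subr0.
exact: restr_ub.
Qed.

Definition Zge E n := linspan (\bigcup_(j in [set j | (n <= j)%N]) E j).

Lemma two_three E :
  (forall f, dual f -> (fun n => restr_norm f (Zt E n)) @ \oo --> (0 : R)) ->
  forall y : nat -> X, (exists M : R, forall n, `|y n| <= M) ->
  (forall n, Zge E n (y n)) -> weakly_null y.
Proof.
move=> H2 y [M HM] Hy f df; apply/cvgrPdist_lt => eps eps0.
pose M' := Num.max M 1.
have M'0 : 0 < M' by rewrite lt_max ltr01 orbT.
have HM' : forall n, `|y n| <= M' by move=> n; rewrite le_max HM.
have [N _ HN] := (cvgrPdist_lt _ _).1 (H2 f df) (eps / M') (divr_gt0 eps0 M'0).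
exists N.+1 => // n /= Nn.
have Zy : Zt E n.-1 (y n).
  apply: linspan_mono (Hy n) => x [j /= nj Ejx]; exists j => //=.
  by apply: leq_trans nj; rewrite prednK // (leq_ltn_trans (leq0n N) Nn).
have := HN n.-1; rewrite /= -ltnS prednK ?(leq_ltn_trans (leq0n N) Nn) // => /(_ Nn).
rewrite sub0r normrN ger0_norm; last exact: restr_ge0 (Zt0 _ _).
move=> Hlt; rewrite sub0r normrN.
apply: le_lt_trans (restr_bound df (@Zt_scale E n.-1) Zy) _.
have := HM' n => Hyn.
have C0 := restr_ge0 df (Zt0 E n.-1).
have := ler_wpM2l C0 Hyn => H1.
apply: le_lt_trans H1 _.
by rewrite -ltr_pdivlMr.
Qed.

Lemma three_two E :
  (forall y : nat -> X, (exists M : R, forall n, `|y n| <= M) ->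
    (forall n, Zge E n (y n)) -> weakly_null y) ->
  forall f, dual f -> (fun n => restr_norm f (Zt E n)) @ \oo --> (0 : R).
Proof.
move=> H3 f df; apply/cvgrPdist_lt => eps eps0.
have Cmono : forall m n, (m <= n)%N -> restr_norm f (Zt E n) <= restr_norm f (Zt E m).
  move=> m n mn; apply: restr_mono => //; first exact: Zt0.
  apply: linspan_mono => x [j /= nj Ejx]; exists j => //=.
  exact: leq_ltn_trans mn nj.
apply: contrapT => Hn.
have Hall : forall n, eps <= restr_norm f (Zt E n).
  move=> n; rewrite leNgt; apply/negP => Hlt; apply: Hn.
  exists n => // m /= nm; rewrite sub0r normrN ger0_norm; last exact: restr_ge0 (Zt0 _ _).
  exact: le_lt_trans (Cmono _ _ nm) Hlt.
have [y Hy] : {y : nat -> X & forall n, (Zt E n (y n) /\ `|y n| <= 1) /\ eps / 2 < `|f (y n)|}.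
  apply: (@choice _ _ (fun n x => (Zt E n x /\ `|x| <= 1) /\ eps / 2 < `|f x|)) => n.
  have : eps / 2 < restr_norm f (Zt E n).
    apply: lt_le_trans (Hall n); lra.
  move=> /(sup_gt _) [].
    by exists `|f 0|, 0; split; [exact: Zt0|rewrite normr0].
  by move=> _ [x Hx <-] Hlt; exists x.
have Hw : (fun n => f (y n)) @ \oo --> (0 : R).
  apply: H3 => //; first by exists 1 => n; have [[]] := Hy n.
  move=> n; have [[Zy _] _] := Hy n.
  apply: linspan_mono Zy => x [j /= nj Ejx]; exists j => //=; exact: ltnW.
have [N _ HN] := (cvgrPdist_lt _ _).1 Hw (eps / 2) (divr_gt0 eps0 (ltr0Sn _ 1)).
have := HN N (leqnn N); rewrite /= sub0r normrN.
have [_ H] := Hy N; move=> H'; have : eps / 2 < eps / 2 := lt_trans H H'.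
by rewrite ltxx.
Qed.

End Rest.

Unset Implicit Arguments.

Theorem proposition2p1 (R : realType) (X : completeNormedModType R)
  (E : nat -> set X) :
  separable X -> FMD E ->
  [<-> shrinking E;
       (forall f, dual f ->
          (fun n => restr_norm f (linspan (\bigcup_(j in [set j | (n < j)%N]) E j)))
            @ \oo --> (0 : R));
       (forall y : nat -> X,
          (exists M : R, forall n, `|y n| <= M) ->
          (forall n, linspan (\bigcup_(j in [set j | (n <= j)%N]) E j) (y n)) ->
          weakly_null y)].
Proof.
move=> _ HF; tfae.
- exact: one_two.
- by move=> H2; apply: two_three.
- by move=> H3; apply: two_one => //; apply: three_two.
Qed.
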